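(* Let $n\ge 1$ and $w\ge 1$ be integers, and let $N_w(n)$ denote the number of partial orders of width at most $w$ on a fixed set of $n$ (labeled) elements. There is a deterministic algorithm which, given a set $P$ of $n$ elements, the integer $w$, and access to a query oracle for an unknown poset $\mathcal{P}=(P,\succ)$ of width at most $w$, sorts $\mathcal{P}$ using at most $2\log N_w(n)+4wn$ oracle queries. In particular, the number of queries is at most $2n\log n+8wn+2w\log w$.
   Context: A poset $(P,\succ)$ consists of a set $P$ and an irreflexive, transitive relation $\succ\subseteq P\times P$. Elements $a,b$ are incomparable if neither $a\succ b$ nor $b\succ a$. An anti-chain is a set of mutually incomparable elements; the width of the poset is the maximum size of an anti-chain. A query oracle for $(P,\succ)$ answers a query on a pair $(x,y)$ of elements by reporting whether $x\succ y$, $y\succ x$, or $x$ and $y$ are incomparable. Sorting the poset means determining, for every pair of elements of $P$, their relation in $(P,\succ)$. The query complexity is the number of oracle queries made. All logarithms are base $2$. *)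

(* Defs.v *)
From mathcomp Require Import all_boot.
From Stdlib Require Import Reals.
Set Implicit Arguments. Unset Strict Implicit. Unset Printing Implicit Defensive.

(* The ground set P is 'I_n.  A binary relation on it is a finite function
   r : {ffun 'I_n * 'I_n -> bool}; r (x, y) means x > y (x ≻ y). *)
Definition relT (n : nat) := {ffun 'I_n * 'I_n -> bool}.

Definition irreflb n (r : relT n) : bool := [forall x, ~~ r (x, x)].
Definition transb n (r : relT n) : bool :=
  [forall x, forall y, forall z, r (x, y) && r (y, z) ==> r (x, z)].
Definition posetb n (r : relT n) : bool := irreflb r && transb r.

Definition incompb n (r : relT n) (x y : 'I_n) : bool := ~~ r (x, y) && ~~ r (y, x).
Definition antichainb n (r : relT n) (A : {set 'I_n}) : bool :=
  [forall x in A, forall y in A, (x != y) ==> incompb r x y].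
Definition width_le n (r : relT n) (w : nat) : bool :=
  [forall A : {set 'I_n}, antichainb r A ==> (#|A| <= w)].

Definition posets_w (n w : nat) : {set relT n} :=
  [set r | posetb r && width_le r w].
Definition N_w (w n : nat) : nat := #|posets_w n w|.

Inductive answer := Ans_gt | Ans_lt | Ans_inc.
Definition oracle n (r : relT n) (x y : 'I_n) : answer :=
  if r (x, y) then Ans_gt else if r (y, x) then Ans_lt else Ans_inc.

(* Deterministic adaptive query algorithms = decision trees: an internal node
   queries the pair (x, y) and continues according to the answer; a leaf
   outputs the (claimed) relation x ≻ y for every pair. *)
Inductive dtree (n : nat) : Type :=
| Leaf : ('I_n -> 'I_n -> bool) -> dtree n
| Query : 'I_n -> 'I_n -> (answer -> dtree n) -> dtree n.

Fixpoint run n (r : relT n) (t : dtree n) : ('I_n -> 'I_n -> bool) * nat :=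
  match t with
  | Leaf o => (o, 0)
  | Query x y k => let p := run r (k (oracle r x y)) in (p.1, p.2.+1)
  end.

Definition log2 (x : R) : R := (ln x / ln 2)%R.

(* Main.v *)
Require Import Defs.
From mathcomp Require Import all_boot.
From Stdlib Require Import Reals Lra.
From mathcomp Require Import ssrnat zify.
Set Implicit Arguments. Unset Strict Implicit. Unset Printing Implicit Defensive.

Lemma ln2_pos : (0 < ln 2)%R.
Proof. have := ln_lt_2; lra. Qed.

Lemma INR_le (a b : nat) : a <= b -> (INR a <= INR b)%R.
Proof. by move=> h; apply: le_INR; apply/leP. Qed.

Lemma INR_pos (a : nat) : 0 < a -> (0 < INR a)%R.
Proof. by move=> h; apply: lt_0_INR; apply/ltP. Qed.

Lemma log2_le (a b : nat) : 0 < a -> a <= b -> (log2 (INR a) <= log2 (INR b))%R.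
Proof.
move=> ha hab; rewrite /log2; apply: Rmult_le_compat_r.
  by apply/Rlt_le/Rinv_0_lt_compat/ln2_pos.
have := INR_le hab; case=> h.
  by apply/Rlt_le/ln_increasing => //; apply: INR_pos.
by rewrite h; apply: Rle_refl.
Qed.

Lemma log2_ge0 (a : nat) : (0 <= log2 (INR a))%R.
Proof.
case: a => [|a].
  have e : ln (INR 0) = 0%R.
    by rewrite /ln; case: Rlt_dec => [/= h|_] //; exfalso; lra.
  rewrite /log2 e.
  by rewrite /Rdiv Rmult_0_l; apply: Rle_refl.
have h := @log2_le 1 a.+1 isT isT.
have e : log2 (INR 1) = 0%R by rewrite /log2 /= ln_1 /Rdiv Rmult_0_l.
by rewrite e in h.
Qed.

Lemma INR_mul (a b : nat) : INR (a * b) = (INR a * INR b)%R.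
Proof. by rewrite -mult_INR. Qed.

Lemma log2_mul (a b : nat) : 0 < a -> 0 < b ->
  log2 (INR (a * b)) = (log2 (INR a) + log2 (INR b))%R.
Proof.
move=> ha hb; rewrite /log2 INR_mul ln_mult; try by apply: INR_pos.
by rewrite /Rdiv Rmult_plus_distr_r.
Qed.

Lemma log2_exp2 d : log2 (INR (2 ^ d)) = INR d.
Proof.
elim: d => [|d IH]; first by rewrite /log2 expn0 /= ln_1 /Rdiv Rmult_0_l.
rewrite expnS log2_mul ?expn_gt0 // IH /log2 S_INR.
have := ln2_pos => h2.
have e : (INR 1 + 1 = 2)%R by rewrite /=; lra.
rewrite e S_INR; field; lra.
Qed.

Definition correct n (r : relT n) (T : dtree n) :=
  forall x y, (run r T).1 x y = r (x, y).
Definition good n (S : {set relT n}) (B : R) :=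
  exists T : dtree n, forall r, r \in S ->
    correct r T /\ (INR (run r T).2 <= log2 (INR #|S|) + B)%R.

Lemma run_query_snd n (r : relT n) x y k :
  (run r (Query x y k)).2 = (run r (k (oracle r x y))).2.+1.
Proof. by []. Qed.

Section Search.
Variables (n : nat) (S : {set relT n}) (j : relT n -> nat) (M : nat).
Variables (qx qy : nat -> 'I_n) (g : nat -> answer -> bool) (B : R).
Hypothesis jM : forall r, r \in S -> j r <= M.
Hypothesis hq : forall t r, 0 < t <= M -> r \in S ->
  g t (oracle r (qx t) (qy t)) = (t <= j r).
Hypothesis hv : forall v, good [set r in S | j r == v] B.

Let sv v := #|[set r in S | j r == v]|.
Let clt v := #|[set r in S | j r < v]|.
Let P v := clt v + clt v.+1.
Let W := #|S|.
Let key d v := (P v * 2 ^ d) %/ W.*2.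

Lemma clt_S v : clt v.+1 = clt v + sv v.
Proof.
rewrite /clt /sv -(cardsID [set r in S | j r < v] [set r in S | j r < v.+1]).
congr addn; apply: eq_card => r; rewrite !inE;
  case: (r \in S) => //=; lia.
Qed.

Lemma clt_mono v1 v2 : v1 <= v2 -> clt v1 <= clt v2.
Proof.
move=> h; apply: subset_leq_card; apply/subsetP => r; rewrite !inE.
case/andP=> -> /= h1; lia.
Qed.

Lemma clt_le v : clt v + sv v <= W.
Proof.
rewrite -clt_S; apply: subset_leq_card; apply/subsetP => r; rewrite !inE.
by case/andP.
Qed.

Lemma sv_pos r : r \in S -> 0 < sv (j r).
Proof. by move=> hr; apply/card_gt0P; exists r; rewrite inE hr eqxx. Qed.

Lemma W_pos r : r \in S -> 0 < W.
Proof. by move=> hr; apply/card_gt0P; exists r. Qed.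

Lemma P_gap v1 v2 : v1 != v2 ->
  (v1 < v2 /\ P v1 + sv v1 <= P v2) \/ (v2 < v1 /\ P v2 + sv v1 <= P v1).
Proof.
move=> hne; case: (ltngtP v1 v2) => h; last by rewrite h eqxx in hne.
- left; split => //; rewrite /P.
  have h1 := clt_mono (ltnW h : v1.+1 <= v2.+1).
  have h2 := clt_mono h. have := clt_S v1. lia.
- right; split => //; rewrite /P.
  have h1 := clt_mono (ltnW h). have h2 := clt_mono h. have := clt_S v1. lia.
Qed.

Lemma isolate d v1 v2 : 0 < W -> key d v1 = key d v2 ->
  W.*2 <= sv v1 * 2 ^ d -> v1 = v2.
Proof.
move=> hW hk hs; apply/eqP; apply/negPn/negP => hne.
move: hk; rewrite /key.
have hp : 0 < 2 ^ d by rewrite expn_gt0.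
case: (P_gap hne) => [[_ h]|[_ h]].
- have : P v1 * 2 ^ d + W.*2 <= P v2 * 2 ^ d.
    apply: leq_trans (leq_add (leqnn _) hs) _; rewrite -mulnDl leq_mul2r h orbT //.
  set a := P v1 * 2 ^ d; set b := P v2 * 2 ^ d; set m := W.*2.
  have : 0 < m by rewrite /m double_gt0. move=> hm hab hk.
  lia.
- have : P v2 * 2 ^ d + W.*2 <= P v1 * 2 ^ d.
    apply: leq_trans (leq_add (leqnn _) hs) _; rewrite -mulnDl leq_mul2r h orbT //.
  set a := P v1 * 2 ^ d; set b := P v2 * 2 ^ d; set m := W.*2.
  have : 0 < m by rewrite /m double_gt0. move=> hm hab hk.
  lia.
Qed.

Lemma key_mono d v1 v2 : v1 <= v2 -> key d v1 <= key d v2.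
Proof.
move=> h; rewrite /key; apply: leq_div2r; rewrite leq_mul2r; apply/orP; right.
rewrite /P; apply: leq_add; apply: clt_mono => //.
Qed.

Lemma key_half d v : key d.+1 v %/ 2 = key d v.
Proof.
rewrite /key expnS mulnCA -divnMA [W.*2 * 2]mulnC divnMl //.
Qed.

Lemma key0 r : r \in S -> key 0 (j r) = 0.
Proof.
move=> hr; rewrite /key expn0 muln1; apply: divn_small.
have := clt_le (j r); have := clt_S (j r); have := sv_pos hr; rewrite /P -!/(clt _).
lia.
Qed.

Lemma claim e : forall d, d + e = W.*2 -> forall a, exists T : dtree n,
  forall r, r \in S -> key d (j r) = a -> correct r T /\
    forall d0, W.*2 <= sv (j r) * 2 ^ d0 ->
      (INR (run r T).2 <= log2 (INR (sv (j r))) + B + INR (d0 - d))%R.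
Proof.
elim: e => [|e IH] d hd a.
- rewrite addn0 in hd.
  case: (boolP [exists r1 in S, key d (j r1) == a]) => [/existsP[r1 /andP[hr1 /eqP hk1]]|hno].
  + case: (hv (j r1)) => T hT; exists T => r hr hk.
    have ejr : j r = j r1.
      apply: (@isolate d) => //; first exact: W_pos hr.
        by rewrite hk hk1.
      rewrite hd; apply: leq_trans (ltnW (ltn_expl _ (isT : 1 < 2))) _.
      by rewrite leq_pmull // sv_pos.
    have hrS : r \in [set r in S | j r == j r1] by rewrite inE hr ejr eqxx.
    case: (hT r hrS) => hc hcost; split => // d0 _.
    rewrite -/(sv (j r1)) -ejr in hcost.
    have := pos_INR (d0 - d); lra.
  + exists (Leaf (fun _ _ => false)) => r hr hk; exfalso.
    move/existsP: hno; apply; exists r; by rewrite hr hk eqxx.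
- have hd' : d.+1 + e = W.*2 by rewrite addSnnS.
  case: (IH _ hd' a.*2) => T0 hT0; case: (IH _ hd' a.*2.+1) => T1 hT1.
  have hsplit : forall r, r \in S -> key d (j r) = a ->
      key d.+1 (j r) = a.*2 \/ key d.+1 (j r) = a.*2.+1.
    move=> r hr hk; have := key_half d (j r); rewrite hk; lia.
  case: (boolP [exists r1 in S, (key d (j r1) == a) && (key d.+1 (j r1) == a.*2)])
    => [/existsP[r1 /and3P[hr1 /eqP hk1 /eqP hl1]]|hno1];
  case: (boolP [exists r2 in S, (key d (j r2) == a) && (key d.+1 (j r2) == a.*2.+1)])
    => [/existsP[r2 /and3P[hr2 /eqP hk2 /eqP hl2]]|hno2].
  +
    have exv : exists v, a.*2.+1 <= key d.+1 v by exists (j r2); rewrite hl2.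
    pose t := ex_minn exv.
    have [ht htmin] : a.*2.+1 <= key d.+1 t /\ forall v, a.*2.+1 <= key d.+1 v -> t <= v.
      by rewrite /t; case: ex_minnP.
    have ht2 : t <= j r2 by apply: htmin; rewrite hl2.
    have ht1 : j r1 < t.
      rewrite ltnNge; apply/negP => h; have := key_mono d.+1 h; rewrite hl1; lia.
    have htM : 0 < t <= M by apply/andP; split; [lia|apply: leq_trans ht2 (jM hr2)].
    exists (Query (qx t) (qy t) (fun ans => if g t ans then T1 else T0)).
    move=> r hr hk.
    have hg := hq htM hr.
    have eqt : (t <= j r) = (key d.+1 (j r) == a.*2.+1).
      case: (hsplit r hr hk) => hl; rewrite hl.
        have -> : (a.*2 == a.*2.+1) = false by lia.
        apply/negP => h; have := key_mono d.+1 h; rewrite hl; lia.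
      by rewrite eqxx; apply: htmin; rewrite hl.
    have hdd : forall d0, W.*2 <= sv (j r) * 2 ^ d0 -> d < d0.
      move=> d0 hd0; rewrite ltnNge; apply/negP => hle.
      have hiso : W.*2 <= sv (j r) * 2 ^ d.
        apply: leq_trans hd0 _; rewrite leq_mul2l leq_pexp2l // orbT //.
      have e1 := isolate (W_pos hr) (etrans hk (esym hk1)) hiso.
      have e2 := isolate (W_pos hr) (etrans hk (esym hk2)) hiso.
      move: hl1 hl2; rewrite -e1 -e2 => ->; lia.
    case: (hsplit r hr hk) => hl.
    * have hb : g t (oracle r (qx t) (qy t)) = false by rewrite hg eqt hl; lia.
      case: (hT0 r hr hl) => hc hcost; split.
        by move=> x y; rewrite /= hb; apply: hc.
      move=> d0 hd0; rewrite run_query_snd hb.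
      have hlt := hdd _ hd0.
      have -> : d0 - d = (d0 - d.+1).+1 by lia.
      rewrite !S_INR; have := hcost _ hd0; lra.
    * have hb : g t (oracle r (qx t) (qy t)) = true by rewrite hg eqt hl eqxx.
      case: (hT1 r hr hl) => hc hcost; split.
        by move=> x y; rewrite /= hb; apply: hc.
      move=> d0 hd0; rewrite run_query_snd hb.
      have hlt := hdd _ hd0.
      have -> : d0 - d = (d0 - d.+1).+1 by lia.
      rewrite !S_INR; have := hcost _ hd0; lra.
  + exists T0 => r hr hk.
    have hl : key d.+1 (j r) = a.*2.
      case: (hsplit r hr hk) => // hl; exfalso; move/existsP: hno2; apply.
      by exists r; rewrite hr hk hl !eqxx.
    case: (hT0 r hr hl) => hc hcost; split => // d0 hd0.
    have := hcost _ hd0; have := le_INR (d0 - d.+1) (d0 - d); 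
    move=> h; have h' : (INR (d0 - d.+1) <= INR (d0 - d))%R by apply: h; apply/leP; lia.
    lra.
  + exists T1 => r hr hk.
    have hl : key d.+1 (j r) = a.*2.+1.
      case: (hsplit r hr hk) => // hl; exfalso; move/existsP: hno1; apply.
      by exists r; rewrite hr hk hl !eqxx.
    case: (hT1 r hr hl) => hc hcost; split => // d0 hd0.
    have h' : (INR (d0 - d.+1) <= INR (d0 - d))%R by apply: le_INR; apply/leP; lia.
    have := hcost _ hd0; lra.
  + exists T0 => r hr hk; exfalso.
    case: (hsplit r hr hk) => hl.
      by move/existsP: hno1; apply; exists r; rewrite hr hk hl !eqxx.
    by move/existsP: hno2; apply; exists r; rewrite hr hk hl !eqxx.
Qed.

Lemma search_good : good S (B + 2).
Proof.
case: (claim (e := W.*2) (d := 0) erefl 0) => T hT; exists T => r hr.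
case: (hT r hr (key0 hr)) => hc hcost; split => //.
have hs := sv_pos hr.
have exd : exists d0, W.*2 <= sv (j r) * 2 ^ d0.
  exists W.*2; apply: leq_trans (ltnW (ltn_expl _ (isT : 1 < 2))) _.
  by rewrite leq_pmull.
pose d0 := ex_minn exd.
have [hd0 hmin] : W.*2 <= sv (j r) * 2 ^ d0 /\ forall d, W.*2 <= sv (j r) * 2 ^ d -> d0 <= d.
  by rewrite /d0; case: ex_minnP.
have hle : sv (j r) * 2 ^ d0 <= 4 * W.
  case e0 : d0 => [|d'].
    rewrite expn0 muln1; have := clt_le (j r); lia.
  have : ~~ (W.*2 <= sv (j r) * 2 ^ d').
    apply/negP => h; have := hmin _ h; lia.
  rewrite expnS; lia.
have := hcost _ hd0; rewrite subn0 => h1.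
have h2 : (log2 (INR (sv (j r))) + INR d0 = log2 (INR (sv (j r) * 2 ^ d0)))%R.
  by rewrite log2_mul ?expn_gt0 // log2_exp2.
have hpos : 0 < sv (j r) * 2 ^ d0 by rewrite muln_gt0 hs expn_gt0.
have h3 := log2_le hpos hle.
have h4 : log2 (INR (4 * W)) = (2 + log2 (INR W))%R.
  rewrite log2_mul // ?(W_pos hr) // (_ : 4 = 2 ^ 2) // log2_exp2.
  by rewrite /= ; lra.
rewrite h4 in h3; rewrite -/W; lra.
Qed.

End Search.

Lemma pigeon (T : finType) (B : {set T}) (h : T -> nat) m i :
  {in B &, injective h} -> (forall b, b \in B -> h b < m) -> i < m ->
  m <= #|B| -> exists2 b, b \in B & h b = i.
Proof.
move=> hinj hlt him hm.
case: (boolP [exists b in B, h b == i]) => [/existsP[b /andP[hb /eqP e]]|hno].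
  by exists b.
exfalso.
have hu : uniq (i :: map h (enum B)).
  rewrite /= map_inj_in_uniq ?enum_uniq ?andbT.
    apply/mapP => -[b hb e]; move/existsP: hno; apply; exists b.
    by rewrite -mem_enum hb e eqxx.
  by move=> x y; rewrite !mem_enum; apply: hinj.
have hs : {subset i :: map h (enum B) <= iota 0 m}.
  move=> t; rewrite inE => /orP[/eqP->|/mapP[b hb ->]]; rewrite mem_iota /=.
    by rewrite add0n.
  by rewrite add0n hlt // -mem_enum.
have := uniq_leq_size hu hs; rewrite /= size_map size_iota -cardE; lia.
Qed.

Lemma arL1 a b c : a < b -> b <= c -> b.-1 < c. Proof. lia. Qed.
Lemma arL2 x b c : x < b.-1 -> b <= c -> x < c. Proof. lia. Qed.
Lemma arL3 x y z k : 0 < x -> y <= k.+1 -> x + z = y -> z <= k. Proof. lia. Qed.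
Lemma arL4 x b : x < b -> x <= b.-1. Proof. lia. Qed.
Lemma arL5 x b c : x < b -> b <= c -> x < c. Proof. lia. Qed.

Section Order.
Variables (T : finType) (R : rel T).
Hypothesis Rirr : forall x, R x x = false.
Hypothesis Rtr : forall x y z, R x y -> R y z -> R x z.

Lemma exists_max (A : {set T}) x0 : x0 \in A ->
  exists2 m, m \in A & forall b, b \in A -> ~~ R b m.
Proof.
move=> hx0.
case: (arg_minnP (fun x => #|[set y | R y x]|) hx0) => m hm hmin.
exists m => // b hb; apply/negP => hbm.
have := hmin b hb; rewrite leqNgt => /negP; apply.
apply: proper_card; apply/properP; split.
  by apply/subsetP => y; rewrite !inE => hyb; apply: Rtr hyb hbm.
by exists b; rewrite !inE // Rirr.
Qed.

Definition chainP (C : {set T}) :=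
  forall a b, a \in C -> b \in C -> a = b \/ R a b \/ R b a.

Definition rk (C : {set T}) z := #|[set z' in C | R z z']|.

Lemma rk_lt (C : {set T}) a b : a \in C -> R a b -> b \in C -> rk C b < rk C a.
Proof.
move=> ha hab hb; apply: proper_card; apply/properP; split.
  by apply/subsetP => y; rewrite !inE => /andP[-> hby]; apply: Rtr hab hby.
by exists b; rewrite !inE ?hb ?hab // Rirr andbF.
Qed.

Lemma rk_ltC (C : {set T}) z : z \in C -> rk C z < #|C|.
Proof.
move=> hz; apply: proper_card; apply/properP; split.
  by apply/subsetP => y; rewrite !inE => /andP[].
by exists z; rewrite // !inE Rirr andbF.
Qed.

Lemma rk_inj (C : {set T}) : chainP C -> {in C &, injective (rk C)}.
Proof.
move=> hC a b ha hb e; case: (hC a b ha hb) => [//|[h|h]].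
  by have := rk_lt ha h hb; rewrite e ltnn.
by have := rk_lt hb h ha; rewrite e ltnn.
Qed.

Lemma rk_surj (C : {set T}) t : chainP C -> t < #|C| -> exists2 z, z \in C & rk C z = t.
Proof.
move=> hC ht; apply: (pigeon (rk_inj hC) (@rk_ltC C)) => //.
Qed.

Lemma prefix (C : {set T}) y z : chainP C -> z \in C ->
  R y z = (rk C z < #|[set z' in C | R y z']|).
Proof.
move=> hC hz; apply/idP/idP => h.
- apply: proper_card; apply/properP; split.
    by apply/subsetP => u; rewrite !inE => /andP[-> hu]; apply: Rtr h hu.
  by exists z; rewrite !inE ?hz ?h // Rirr andbF.
- apply/negPn/negP => hn; move: h; rewrite ltnNge => /negP; apply.
  apply: subset_leq_card; apply/subsetP => u; rewrite !inE => /andP[hu hyu].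
  rewrite hu /=; case: (hC z u hz hu) => [e|[//|huz]].
    by move: hyu; rewrite -e => hyz; rewrite hyz in hn.
  by have := Rtr hyu huz; rewrite (negbTE hn).
Qed.


Definition ach (B : {set T}) :=
  forall x y, x \in B -> y \in B -> x != y -> ~~ R x y.
Definition acb (B : {set T}) :=
  [forall x in B, forall y in B, (x != y) ==> ~~ R x y].

Lemma achP B : reflect (ach B) (acb B).
Proof.
apply: (iffP idP).
  by move=> /forall_inP h x y hx hy hxy; move/forall_inP: (h x hx) => /(_ y hy) /implyP; apply.
move=> h; apply/forall_inP => x hx; apply/forall_inP => y hy; apply/implyP; exact: h.
Qed.

Lemma dilworth_gen k : forall (A : {set T}) (w : nat), #|A| <= k ->
  (forall B : {set T}, B \subset A -> ach B -> #|B| <= w) ->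
  exists f : T -> nat, (forall a, a \in A -> f a < w) /\
    (forall a b, a \in A -> b \in A -> f a = f b -> a = b \/ R a b \/ R b a).
Proof.
elim: k => [|k IH] A w hA hw.
  exists (fun _ => 0); split => a; move: hA; rewrite leqn0 cards_eq0 => /eqP->;
    by rewrite inE.
case: (set_0Vmem A) => [->|[a0 ha0]].
  by exists (fun _ => 0); split => a; rewrite inE.
case: (exists_max ha0) => a ha hamax.
pose A' := A :\ a.
have hA' : #|A'| <= k by move: hA; rewrite /A' (cardsD1 a A) ha; lia.
have sA' : A' \subset A by apply: subsetDl.
pose acP := fun B : {set T} => (B \subset A') && acb B.
pose kk := \max_(B | acP B) #|B|.
have hkw : kk <= w.
  apply/bigmax_leqP => B /andP[hB /achP hac]; apply: hw => //.
  exact: subset_trans hB sA'.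
have hwA' : forall B : {set T}, B \subset A' -> ach B -> #|B| <= kk.
  by move=> B hB hac; apply: (@leq_bigmax_cond _ acP); rewrite /acP hB; apply/achP.
case: (IH A' kk hA' hwA') => f' [hf'lt hf'ch].
pose MaxAC := fun B : {set T} => acP B && (#|B| == kk).
have [B0 hB0] : exists B0, MaxAC B0.
  have hpos : 0 < #|acP|.
    apply/card_gt0P; exists set0; rewrite unfold_in /acP sub0set /=; apply/achP.
    by move=> x y; rewrite inE.
  case: (eq_bigmax_cond (fun B : {set T} => #|B|) hpos) => B hB e.
  exists B; apply/andP; split; first by move: hB; rewrite unfold_in.
  by apply/eqP; rewrite /kk; exact: (esym e).
have meet : forall B : {set T}, MaxAC B -> forall i, i < kk -> exists2 z, z \in B & f' z = i.
  move=> B /andP[/andP[hB /achP hac] /eqP hcard] i hi.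
  apply: (pigeon (m := kk)) => //.
  - move=> b1 b2 hb1 hb2 e.
    case: (hf'ch b1 b2 (subsetP hB _ hb1) (subsetP hB _ hb2) e) => [//|[h|h]].
      by case: (eqVneq b1 b2) => // hne; have := hac _ _ hb1 hb2 hne; rewrite h.
    by case: (eqVneq b2 b1) => // hne; have := hac _ _ hb2 hb1 hne; rewrite h.
  - by move=> b hb; apply: hf'lt; apply: (subsetP hB).
  - by rewrite hcard.
pose Y i := [set z in A' | (f' z == i) && [exists B, MaxAC B && (z \in B)]].
have Yne : forall i, i < kk -> exists z, z \in Y i.
  move=> i hi; case: (meet B0 hB0 i hi) => z hz e; exists z.
  rewrite inE e eqxx /=; move: (hB0) => /andP[/andP[hB _] _].
  rewrite (subsetP hB _ hz) /=; apply/existsP; exists B0; by rewrite hB0 hz.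
pose x i := odflt a [pick z in Y i | [forall z' in Y i, ~~ R z' z]].
have hx : forall i, i < kk -> x i \in Y i /\ forall z, z \in Y i -> ~~ R z (x i).
  move=> i hi; rewrite /x; case: pickP => [z /andP[hz /forall_inP hm]|hno] /=.
    by split.
  exfalso; case: (Yne i hi) => z0 hz0; case: (exists_max hz0) => m hm hmm.
  by have := hno m; rewrite hm /=; move/negP; apply; apply/forall_inP.
have YA' : forall i z, z \in Y i -> z \in A' /\ f' z = i.
  by move=> i z; rewrite inE => /andP[-> /andP[/eqP-> _]].
have below : forall i, i < kk -> forall z, z \in Y i -> z = x i \/ R (x i) z.
  move=> i hi z hz; case: (hx i hi) => hxi hxm.
  case: (YA' _ _ hz) => hzA hfz; case: (YA' _ _ hxi) => hxA hfx.
  case: (hf'ch z (x i) hzA hxA (etrans hfz (esym hfx))) => [->|[h|h]]; [by left| |by right].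
  by have := hxm z hz; rewrite h.
pose X := [set x (nat_of_ord i) | i : 'I_kk].
have XY : forall u, u \in X -> exists2 i, i < kk & u = x i /\ u \in Y i.
  move=> u /imsetP[i _ ->]; exists i => //; split => //; exact: (hx i (ltn_ord i)).1.
have XA' : X \subset A'.
  by apply/subsetP => u /XY[i hi [_ hu]]; case: (YA' _ _ hu).
have cardX : #|X| = kk.
  rewrite card_imset ?card_ord // => i1 i2 e; apply: val_inj => /=.
  case: (YA' _ _ (hx i1 (ltn_ord i1)).1) => _ h1; case: (YA' _ _ (hx i2 (ltn_ord i2)).1) => _ h2.
  by rewrite -h1 -h2 /= e.
have Xac : ach X.
  move=> u v hu hv huv; apply/negP => huv'.
  case: (XY u hu) => i hi [eu hui]; case: (XY v hv) => j hj [ev hvj].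
  move: hui; rewrite inE => /andP[huA /andP[/eqP hfu /existsP[B /andP[hMB huB]]]].
  case: (meet B hMB j hj) => z hzB hfz.
  move: (hMB) => /andP[/andP[hB /achP hac] _].
  have hzY : z \in Y j.
    rewrite inE (subsetP hB _ hzB) hfz eqxx /=; apply/existsP; exists B; by rewrite hMB hzB.
  have huz : R u z.
    case: (below j hj z hzY) => [ez|hxz]; first by rewrite ez -ev.
    by apply: Rtr huv' _; rewrite ev.
  have hne : u != z.
    apply/eqP => e; move: hfu hfz; rewrite e => -> hij.
    move: huv; rewrite eu ev hij; by rewrite eqxx.
  by have := hac u z huB hzB hne; rewrite huz.
case: (boolP [exists z in X, R a z]) => [/existsP[z /andP[hzX haz]]|hno].
-
  case: (XY z hzX) => i hi [ez hzY].
  pose K := a |: [set y in A' | (f' y == i) && ((y == z) || R z y)].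
  pose A'' := A :\: K.
  have haK : a \in K by rewrite !inE eqxx.
  have hA'' : #|A''| <= k.
    have h1 := cardsID K A; rewrite -/A'' in h1.
    have h2 : 0 < #|A :&: K| by apply/card_gt0P; exists a; rewrite inE ha haK.
    exact: arL3 h2 hA h1.
  have hw'' : forall B : {set T}, B \subset A'' -> ach B -> #|B| <= kk.-1.
    move=> B hB hac.
    have hBA' : B \subset A'.
      apply/subsetP => u hu; move: (subsetP hB _ hu); rewrite !inE => /andP[hnK ->].
      by rewrite andbT; apply: contraNneq hnK => ->; rewrite eqxx.
    have hle := hwA' B hBA' hac.
    case: (ltngtP #|B| kk) => hc; [exact: arL4|by rewrite leqNgt hc in hle|exfalso].
    have hM : MaxAC B.
      by apply/andP; split; [apply/andP; split => //; apply/achP | rewrite hc].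
    case: (meet B hM i hi) => y hyB hfy.
    have hyY : y \in Y i.
      rewrite inE (subsetP hBA' _ hyB) hfy eqxx /=; apply/existsP; exists B; by rewrite hM hyB.
    have hyK : y \in K.
      apply/setU1P; right; apply/setIdP; split; first exact: (subsetP hBA').
      rewrite hfy eqxx /=.
      by case: (below i hi y hyY) => [->|h]; rewrite ez ?eqxx ?h ?orbT.
    by move: (subsetP hB _ hyB); rewrite inE hyK.
  case: (IH A'' kk.-1 hA'' hw'') => f'' [hf''lt hf''ch].
  exists (fun y => if y \in K then kk.-1 else f'' y); split.
    move=> y hy; case: ifP => hyK; first exact: arL1 hi hkw.
    have : y \in A'' by rewrite inE hyK hy.
    by move/hf''lt => h; apply: arL2 h hkw.
  have Kch : forall u v, u \in K -> v \in K -> u = v \/ R u v \/ R v u.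
    have hK : forall u, u \in K -> u = a \/ (u \in A' /\ f' u = i /\ (u = z \/ R z u)).
      move=> u; rewrite !inE => /orP[/eqP->|/andP[hu /andP[/eqP hf /orP[/eqP e|h]]]].
      - by left.
      - by right; split => //; split => //; left.
      - by right; split => //; split => //; right.
    have haR : forall u, u \in A' -> (u = z \/ R z u) -> R a u.
      by move=> u _ [->|h] //; apply: Rtr haz h.
    move=> u v /hK[->|[hu [hfu hzu]]] /hK[->|[hv [hfv hzv]]].
    - by left.
    - by right; left; apply: haR.
    - by right; right; apply: haR.
    - exact: hf'ch (etrans hfu (esym hfv)).
  move=> u v hu hv /=; case: ifP => huK; case: ifP => hvK.
  - by move=> _; apply: Kch.
  - have : v \in A'' by rewrite inE hvK hv.
    by move/hf''lt => h e; move: h; rewrite -?e ?e ltnn.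
  - have : u \in A'' by rewrite inE huK hu.
    by move/hf''lt => h e; move: h; rewrite -?e ?e ltnn.
  - by apply: hf''ch; rewrite inE ?huK ?hvK.
-
  have haX : a \notin X by apply/negP => /(subsetP XA'); rewrite !inE eqxx.
  have hac : ach (a |: X).
    move=> u v; rewrite !inE => /orP[/eqP->|hu] /orP[/eqP->|hv] hne.
    - by rewrite eqxx in hne.
    - by apply/negP => h; move/existsP: hno; apply; exists v; rewrite hv h.
    - by apply: hamax; apply: (subsetP sA'); apply: (subsetP XA').
    - exact: Xac.
  have hsub : a |: X \subset A.
    by apply/subsetP => u; rewrite !inE => /orP[/eqP->//|/(subsetP XA')]; rewrite inE => /andP[].
  have hcard := hw _ hsub hac.
  rewrite cardsU1 haX cardX in hcard.
  exists (fun y => if y == a then kk else f' y); split.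
    move=> y hy; case: eqP => [_|hya]; first by rewrite add1n in hcard.
    have : y \in A' by rewrite !inE hy andbT; apply/eqP.
    move/hf'lt => h; apply: arL5 h _; rewrite add1n in hcard; exact: ltnW.
  move=> u v hu hv /=; case: eqP => [->|hua]; case: eqP => [->|hva] //.
  - by left.
  - have : v \in A' by rewrite !inE hv andbT; apply/eqP.
    by move/hf'lt => h e; move: h; rewrite -?e ?e ltnn.
  - have : u \in A' by rewrite !inE hu andbT; apply/eqP.
    by move/hf'lt => h e; move: h; rewrite -?e ?e ltnn.
  - apply: hf'ch; by rewrite !inE ?hu ?hv andbT; apply/eqP.
Qed.

End Order.

Definition isgt (a : answer) := if a is Ans_gt then true else false.
Definition islt (a : answer) := if a is Ans_lt then true else false.

Section Posets.
Variable n : nat.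
Implicit Types (r : relT n) (S : {set relT n}).

Lemma posetP r : posetb r -> (forall x, r (x,x) = false) /\
  (forall x y z, r (x,y) -> r (y,z) -> r (x,z)).
Proof.
case/andP => /forallP hi /forallP ht; split.
  by move=> x; apply/negbTE; apply: hi.
move=> x y z hxy hyz; move: (ht x) => /forallP /(_ y) /forallP /(_ z) /implyP; apply.
by rewrite hxy hyz.
Qed.

Lemma isgt_oracle r x y : isgt (oracle r x y) = r (x,y).
Proof. by rewrite /oracle; case: (r (x,y)) => //; case: (r (y,x)). Qed.

Lemma islt_oracle r x y : posetb r -> islt (oracle r x y) = r (y,x).
Proof.
move=> /posetP[hi ht]; rewrite /oracle; case hxy: (r (x,y)); case hyx: (r (y,x)) => //.
by have := ht _ _ _ hxy hyx; rewrite hi.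
Qed.

Lemma dilw r w (A : {set 'I_n}) : posetb r -> width_le r w ->
  exists f : 'I_n -> nat, (forall a, a \in A -> f a < w) /\
    (forall a b, a \in A -> b \in A -> f a = f b -> a = b \/ r (a,b) \/ r (b,a)).
Proof.
move=> hp hw; case: (posetP hp) => hi ht.
apply: (@dilworth_gen _ (fun a b => r (a,b)) hi ht #|A| A w (leqnn _)).
move=> B _ hB; move/forallP: hw => /(_ B) /implyP; apply.
apply/forall_inP => a ha; apply/forall_inP => b hb; apply/implyP => hab.
by rewrite /incompb (negbTE (hB a b ha hb hab)) (negbTE (hB b a hb ha _)) // eq_sym.
Qed.

Definition agree S k := forall r r', r \in S -> r' \in S ->
  forall a b : 'I_n, a < k -> b < k -> r (a,b) = r' (a,b).

Lemma good_mono S B1 B2 : good S B1 -> (B1 <= B2)%R -> good S B2.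
Proof.
move=> [T hT] hB; exists T => r hr; case: (hT r hr) => h1 h2; split => //; lra.
Qed.

Lemma good_nil S B : (forall r, r \notin S) -> good S B.
Proof. by move=> h; exists (Leaf (fun _ _ => false)) => r hr; move: (h r); rewrite hr. Qed.

Lemma agree_sub S S' k : S' \subset S -> agree S k -> agree S' k.
Proof. by move=> hs ha r r' hr hr'; apply: ha; apply: (subsetP hs). Qed.

Section Phase.
Variables (w k : nat) (x : 'I_n) (f : 'I_n -> nat) (B : R).
Hypothesis hxk : nat_of_ord x = k.
Hypothesis hfw : forall a : 'I_n, a < k -> f a < w.
Hypothesis hIH : forall S', S' \subset posets_w n w -> agree S' k.+1 -> good S' B.

Definition inA (a : 'I_n) := a < k.
Definition chainS S := forall r, r \in S -> forall a b : 'I_n, a < k -> b < k ->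
  f a = f b -> a = b \/ r (a,b) \/ r (b,a).
Definition agreeX S i := forall r r', r \in S -> r' \in S ->
  forall z : 'I_n, z < k -> f z < i -> r (x,z) = r' (x,z) /\ r (z,x) = r' (z,x).

Lemma chainS_sub S S' : S' \subset S -> chainS S -> chainS S'.
Proof. by move=> hs hc r hr; apply: hc; apply: (subsetP hs). Qed.
Lemma agreeX_sub S S' i : S' \subset S -> agreeX S i -> agreeX S' i.
Proof. by move=> hs ha r r' hr hr'; apply: ha; apply: (subsetP hs). Qed.

Lemma subset_filter S (P : pred (relT n)) : [set r in S | P r] \subset S.
Proof. by apply/subsetP => r; rewrite inE => /andP[]. Qed.

Lemma phase m : forall i, i + m = w -> forall S, S \subset posets_w n w ->
  agree S k -> chainS S -> agreeX S i -> good S (B + 4 * INR m).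
Proof.
elim: m => [|m IH] i him S hS hag hch hX.
- rewrite addn0 in him; subst i.
  apply: (good_mono (B1 := B)); last by rewrite /= Rmult_0_r Rplus_0_r; apply: Rle_refl.
  apply: hIH => // r r' hr hr' a b ha hb.
  have hpr : forall r, r \in S -> posetb r.
    by move=> q hq; move: (subsetP hS _ hq); rewrite inE => /andP[].
  have ex : forall c : 'I_n, c < k.+1 -> c < k \/ c = x.
    move=> c hc; case: (ltngtP c k) => h; [by left|lia|right; apply: val_inj => /=; lia].
  case: (ex a ha) => [ha'|->]; case: (ex b hb) => [hb'|->].
  + exact: hag.
  + exact: (hX r r' hr hr' a ha' (hfw ha')).2.
  + exact: (hX r r' hr hr' b hb' (hfw hb')).1.
  + by rewrite (posetP (hpr r hr)).1 (posetP (hpr r' hr')).1.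
- case: (set_0Vmem S) => [e|[r0 hr0]].
    by apply: good_nil => r; rewrite e inE.
  have hpr : forall r, r \in S -> posetb r.
    by move=> q hq; move: (subsetP hS _ hq); rewrite inE => /andP[].
  pose C := [set z : 'I_n | (z < k) && (f z == i)].
  have hCk : forall z, z \in C -> z < k by move=> z; rewrite inE => /andP[].
  pose Rr := fun (r : relT n) a b => r (a,b).
  pose Rt := fun (r : relT n) a b => r (b,a).
  have Rr_irr : forall r, r \in S -> forall a, Rr r a a = false.
    by move=> r hr a; rewrite /Rr (posetP (hpr r hr)).1.
  have Rr_tr : forall r, r \in S -> forall a b c, Rr r a b -> Rr r b c -> Rr r a c.
    by move=> r hr a b c; rewrite /Rr; apply: (posetP (hpr r hr)).2.
  have Rt_irr : forall r, r \in S -> forall a, Rt r a a = false.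
    by move=> r hr a; rewrite /Rt (posetP (hpr r hr)).1.
  have Rt_tr : forall r, r \in S -> forall a b c, Rt r a b -> Rt r b c -> Rt r a c.
    by move=> r hr a b c hab hbc; rewrite /Rt; apply: (posetP (hpr r hr)).2 hbc hab.
  have chC : forall r, r \in S -> chainP (Rr r) C.
    move=> r hr a b ha hb; move: ha hb; rewrite !inE => /andP[ha /eqP fa] /andP[hb /eqP fb].
    by apply: (hch r hr) => //; rewrite fa fb.
  have chCt : forall r, r \in S -> chainP (Rt r) C.
    move=> r hr a b ha hb; case: (chC r hr a b ha hb) => [->|[h|h]]; [by left|by right;right|by right;left].
  have rk_ag : forall r, r \in S -> forall z, z \in C -> rk (Rr r) C z = rk (Rr r0) C z.
    move=> r hr z hz; apply: eq_card => u; rewrite !inE.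
    case hu: (u < k) => //=; case: (f u == i) => //=.
    by rewrite /Rr (hag r r0 hr hr0 z u (hCk z hz) hu).
  have rkt_ag : forall r, r \in S -> forall z, z \in C -> rk (Rt r) C z = rk (Rt r0) C z.
    move=> r hr z hz; apply: eq_card => u; rewrite !inE.
    case hu: (u < k) => //=; case: (f u == i) => //=.
    by rewrite /Rt (hag r r0 hr hr0 u z hu (hCk z hz)).
  pose jd := fun r : relT n => #|[set z in C | r (x,z)]|.
  pose ju := fun r : relT n => #|[set z in C | r (z,x)]|.
  pose qd := fun t => odflt x [pick z in C | rk (Rr r0) C z == t.-1].
  pose qu := fun t => odflt x [pick z in C | rk (Rt r0) C z == t.-1].
  have qdP : forall t, 0 < t <= #|C| -> qd t \in C /\ rk (Rr r0) C (qd t) = t.-1.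
    move=> t /andP[h0 h1]; rewrite /qd; case: pickP => [z /andP[hz /eqP e]|hno] //=.
    case: (rk_surj (Rr_irr r0 hr0) (Rr_tr r0 hr0) (t := t.-1) (chC r0 hr0)) => [|z hz e]; first lia.
    by have := hno z; rewrite hz e eqxx.
  have quP : forall t, 0 < t <= #|C| -> qu t \in C /\ rk (Rt r0) C (qu t) = t.-1.
    move=> t /andP[h0 h1]; rewrite /qu; case: pickP => [z /andP[hz /eqP e]|hno] //=.
    case: (rk_surj (Rt_irr r0 hr0) (Rt_tr r0 hr0) (t := t.-1) (chCt r0 hr0)) => [|z hz e]; first lia.
    by have := hno z; rewrite hz e eqxx.
  have pd : forall r, r \in S -> forall z, z \in C -> r (x,z) = (rk (Rr r0) C z < jd r).
    move=> r hr z hz; rewrite -(rk_ag r hr z hz).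
    exact: (prefix (Rr_irr r hr) (Rr_tr r hr) x (chC r hr) hz).
  have pu : forall r, r \in S -> forall z, z \in C -> r (z,x) = (rk (Rt r0) C z < ju r).
    move=> r hr z hz; rewrite -(rkt_ag r hr z hz).
    exact: (prefix (Rt_irr r hr) (Rt_tr r hr) x (chCt r hr) hz).
  apply: (good_mono (B1 := B + 4 * INR m + 2 + 2)); last by rewrite S_INR; lra.
  apply: (search_good (j := jd) (M := #|C|) (qx := fun _ => x) (qy := qd) (g := fun _ => isgt)).
  + by move=> r hr; apply: subset_leq_card; apply/subsetP => z; rewrite inE => /andP[].
  + move=> t r ht hr; rewrite isgt_oracle; case: (qdP t ht) => hq hrk.
    rewrite (pd r hr _ hq) hrk; case/andP: ht => ht _; lia.
  move=> v; set Sv := [set r in S | jd r == v].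
  have hSv : Sv \subset S by apply: subset_filter.
  apply: (search_good (j := ju) (M := #|C|) (qx := fun _ => x) (qy := qu) (g := fun _ => islt)).
  + by move=> r hr; apply: subset_leq_card; apply/subsetP => z; rewrite inE => /andP[].
  + move=> t r ht hr; have hrS := subsetP hSv _ hr.
    rewrite islt_oracle ?hpr //; case: (quP t ht) => hq hrk.
    rewrite (pu r hrS _ hq) hrk; case/andP: ht => ht _; lia.
  move=> v'; set Svv := [set r in Sv | ju r == v'].
  have hSvv : Svv \subset S by apply: subset_trans hSv; apply: subset_filter.
  apply: (IH i.+1); first by rewrite addSnnS.
  + exact: subset_trans hSvv hS.
  + exact: agree_sub hSvv hag.
  + exact: chainS_sub hSvv hch.
  + move=> r r' hr hr' z hz hfz.
    have hrS := subsetP hSvv _ hr; have hr'S := subsetP hSvv _ hr'.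
    case: (ltngtP (f z) i) => hfi; [exact: hX|lia|].
    have hzC : z \in C by rewrite inE hz hfi eqxx.
    move: hr hr'; rewrite !inE => /andP[/andP[_ /eqP hv1] /eqP hu1] /andP[/andP[_ /eqP hv2] /eqP hu2].
    rewrite (pd r hrS z hzC) (pd r' hr'S z hzC) (pu r hrS z hzC) (pu r' hr'S z hzC).
    by rewrite hv1 hv2 hu1 hu2.
Qed.

End Phase.

End Posets.

Lemma main_ind n w : forall m k, k + m = n -> forall S : {set relT n},
  S \subset posets_w n w -> agree S k -> good S (4 * INR w * INR m).
Proof.
elim=> [|m IH] k hkm S hS hag.
- rewrite addn0 in hkm; subst k.
  case: (set_0Vmem S) => [e|[r0 hr0]].
    by apply: good_nil => r; rewrite e inE.
  exists (Leaf (fun a b => r0 (a,b))) => r hr; split.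
    by move=> a b /=; apply: hag.
  rewrite /= Rmult_0_r Rplus_0_r; exact: log2_ge0.
- have hk : k < n by lia.
  pose x := Ordinal hk.
  case: (set_0Vmem S) => [e|[r0 hr0]].
    by apply: good_nil => r; rewrite e inE.
  have hpr : forall r, r \in S -> posetb r /\ width_le r w.
    by move=> q hq; move: (subsetP hS _ hq); rewrite inE => /andP[].
  case: (hpr r0 hr0) => hp0 hw0.
  case: (@dilw n r0 w [set z : 'I_n | z < k] hp0 hw0) => f [hfw hfch].
  have hIH : forall S' : {set relT n}, S' \subset posets_w n w -> agree S' k.+1 ->
      good S' (4 * INR w * INR m).
    by move=> S' hS' hag'; apply: (IH k.+1) => //; rewrite addSnnS.
  have hfw' : forall a : 'I_n, a < k -> f a < w by move=> a ha; apply: hfw; rewrite inE.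
  have := @phase n w k x f (4 * INR w * INR m) erefl hfw' hIH w 0 erefl S hS hag.
  move=> H.
  apply: (good_mono (B1 := (4 * INR w * INR m + 4 * INR w)%R)); last first.
    by rewrite S_INR; lra.
  apply: H.
  + move=> r hr a b ha hb e.
    have ha' : a \in [set z : 'I_n | z < k] by rewrite inE.
    have hb' : b \in [set z : 'I_n | z < k] by rewrite inE.
    case: (hfch a b ha' hb' e) => [->|[h|h]]; first by left.
      by right; left; rewrite -(hag r0 r hr0 hr a b ha hb).
    by right; right; rewrite -(hag r0 r hr0 hr b a hb ha).
  + by move=> r r' _ _ z _; rewrite ltn0.
Qed.

Lemma algo n w : good (posets_w n w) (4 * INR w * INR n).
Proof.
apply: (@main_ind n w n 0 erefl).
  exact: subxx.
by move=> r r' _ _ a b; rewrite ltn0.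
Qed.

Section Count.
Variables (n w : nat).
Implicit Types (r : relT n).

Definition coverb r (F : {ffun 'I_n -> 'I_w.+1}) :=
  [forall a, F a < w] &&
  [forall a, forall b, (F a == F b) ==> [|| a == b, r (a,b) | r (b,a)]].

Section Fixed.
Variable F : {ffun 'I_n -> 'I_w.+1}.

Definition Ch (i : nat) := [set z : 'I_n | nat_of_ord (F z) == i].
Definition rkr r a := #|[set z | (nat_of_ord (F z) == F a) && r (a,z)]|.
Definition bc r (i : nat) y := #|[set z | (nat_of_ord (F z) == i) && r (y,z)]|.
Definition jb r i y := (0 < bc r i y) &&
  [forall p, ((nat_of_ord (F p) == F y) && r (y,p)) ==> (bc r i p < bc r i y)].
Definition hb r (j : nat) z :=
  [exists p, (nat_of_ord (F p) == j) && (bc r (F z) p == (rkr r z).+1)].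
Definition bit r (p : 'I_w * 'I_n * bool) :=
  let: (i, y, b) := p in
  if b then (nat_of_ord (F y) != i) && hb r i y
  else (nat_of_ord (F y) != i) && jb r i y.

Section OneRel.
Variable r : relT n.
Hypothesis hp : posetb r.
Hypothesis hc : coverb r F.

Let Rl := fun a b => r (a,b).
Lemma Rl_irr : forall a, Rl a a = false. Proof. exact: (posetP hp).1. Qed.
Lemma Rl_tr : forall a b c, Rl a b -> Rl b c -> Rl a c. Proof. exact: (posetP hp).2. Qed.

Lemma Fw a : F a < w.
Proof. by case/andP: hc => /forallP h _; apply: h. Qed.

Lemma chCh i : chainP Rl (Ch i).
Proof.
move=> a b; rewrite !inE => /eqP ha /eqP hb.
case/andP: hc => _ /forallP /(_ a) /forallP /(_ b) /implyP h.
have : F a == F b by apply/eqP; apply: val_inj; rewrite /= ha hb.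
move/h => /or3P[/eqP->|h1|h1]; [by left|by right;left|by right;right].
Qed.

Lemma prefix_cross y z : r (y,z) = (rkr r z < bc r (F z) y).
Proof.
have hz : z \in Ch (F z) by rewrite inE.
have e := prefix Rl_irr Rl_tr y (chCh (i := F z)) hz; rewrite /Rl /= in e; rewrite e.
congr (_ < _).
  by apply: eq_card => u; rewrite !inE.
by apply: eq_card => u; rewrite !inE.
Qed.

Lemma bc_same y : bc r (F y) y = rkr r y.
Proof. by []. Qed.

Lemma intra a b : nat_of_ord (F a) = F b -> r (a,b) = (rkr r b < rkr r a).
Proof. by move=> e; rewrite prefix_cross -e. Qed.

Lemma mono i y p : r (y,p) -> bc r i p <= bc r i y.
Proof.
move=> hyp; apply: subset_leq_card; apply/subsetP => z; rewrite !inE.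
by case/andP=> -> /= hpz; apply: Rl_tr hyp hpz.
Qed.

Lemma bc_le i y : bc r i y <= #|Ch i|.
Proof. by apply: subset_leq_card; apply/subsetP => z; rewrite !inE => /andP[]. Qed.

Lemma rk_Ch z : rk Rl (Ch (F z)) z = rkr r z.
Proof. by apply: eq_card => u; rewrite !inE. Qed.

End OneRel.

Section TwoRel.
Variables r1 r2 : relT n.
Hypotheses (hp1 : posetb r1) (hp2 : posetb r2) (hc1 : coverb r1 F) (hc2 : coverb r2 F).
Hypothesis hrk : forall a, rkr r1 a = rkr r2 a.
Hypothesis hbit : forall p, bit r1 p = bit r2 p.

Lemma step_le i y : i < w -> nat_of_ord (F y) != i ->
  (forall p, nat_of_ord (F p) = F y -> r1 (y,p) -> bc r1 i p = bc r2 i p) ->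
  bc r1 i y <= bc r2 i y.
Proof.
move=> hiw hyi IH.
have same : forall p, nat_of_ord (F p) = F y -> r1 (y,p) = r2 (y,p).
  by move=> p e; rewrite (intra hp1 hc1 (esym e)) (intra hp2 hc2 (esym e)) !hrk.
have hjb : jb r1 i y = jb r2 i y.
  by have := hbit (Ordinal hiw, y, false); rewrite /= hyi.
case hj1: (jb r1 i y).
- rewrite hj1 in hjb; move: hj1 (esym hjb) => /andP[h1pos /forall_inP h1] /andP[h2pos /forall_inP h2].
  rewrite leqNgt; apply/negP => hlt.
  set beta := bc r2 i y.
  have hb1 : beta.-1 < #|Ch i|.
    have := bc_le r2 i y; rewrite -/beta; lia.
  have hchi : chainP (fun a b => r2 (a,b)) (Ch i) by apply: chCh.
  case: (rk_surj (Rl_irr hp2) (Rl_tr hp2) hchi hb1) => z hz hrkz.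
  have hFz : nat_of_ord (F z) = i by move: hz; rewrite inE => /eqP.
  rewrite -hFz in hrkz; rewrite (rk_Ch r2) in hrkz.
  have hFyw := Fw hc1 y.
  have hbit2 : bit r2 (Ordinal hFyw, z, true).
    rewrite /= hFz eq_sym hyi /=; apply/existsP; exists y; rewrite eqxx /= hFz -/beta.
    by rewrite hrkz; apply/eqP; lia.
  move: hbit2; rewrite -hbit /= => /andP[_ /existsP[p /andP[/eqP hFp /eqP hbp]]].
  rewrite hFz hrk hrkz in hbp.
  have hbp' : bc r1 i p = beta by rewrite hbp; lia.
  case: (chCh hc1 (i := F y) (a := y) (b := p)) => //; rewrite ?inE ?hFp //.
  + move=> e; subst p; lia.
  + move=> [h|h].
    * have := h2 p; rewrite /= hFp eqxx /= -same // h => /(_ isT).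
      by rewrite -IH // hbp'; rewrite ltnn.
    * have := mono hp1 i h; lia.
- rewrite hj1 in hjb.
  move/negbT: hj1; rewrite negb_and -leqNgt leqn0 => /orP[/eqP->//|].
  rewrite negb_forall => /existsP[p]; rewrite negb_imply => /andP[/andP[/eqP hFp hyp]].
  rewrite -leqNgt => hle.
  apply: leq_trans hle _; rewrite IH //; apply: mono => //.
  by rewrite -same.
Qed.

End TwoRel.

End Fixed.

Definition codeF r : {ffun 'I_n -> 'I_w.+1} := odflt [ffun _ => ord0] [pick F | coverb r F].
Definition code r :=
  (codeF r, [ffun a => (inord (rkr (codeF r) r a) : 'I_n.+1)], [ffun p => bit (codeF r) r p]).

Lemma codeF_cover r : r \in posets_w n w -> coverb r (codeF r).
Proof.
rewrite inE => /andP[hp hw]; rewrite /codeF; case: pickP => [F hF //|hno].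
exfalso; case: (@dilw n r w setT hp hw) => f [hfw hch].
pose F := [ffun a => (inord (f a) : 'I_w.+1)].
have hF : forall a, nat_of_ord (F a) = f a.
  by move=> a; rewrite ffunE inordK // ltnS ltnW // hfw.
move: (hno F) => /negP; apply; apply/andP; split.
  by apply/forallP => a; rewrite hF hfw.
apply/forallP => a; apply/forallP => b; apply/implyP => /eqP e.
have e' : f a = f b by rewrite -!hF e.
by case: (hch a b (in_setT a) (in_setT b) e') => [->|[h|h]]; rewrite ?eqxx ?h ?orbT.
Qed.

Lemma code_inj : {in posets_w n w &, injective code}.
Proof.
move=> r1 r2 h1 h2 [eF eG eH].
have hc1 := codeF_cover h1; have hc2 := codeF_cover h2.
rewrite -eF in hc2.
set F := codeF r1 in hc1 hc2 eG eH.
have hp1 : posetb r1 by move: h1; rewrite inE => /andP[].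
have hp2 : posetb r2 by move: h2; rewrite inE => /andP[].
have hrk : forall a, rkr F r1 a = rkr F r2 a.
  move=> a; move/ffunP: eG => /(_ a); rewrite !ffunE => e.
  have b1 : rkr F r1 a < n.+1 by rewrite ltnS; apply: leq_trans (max_card _) _; rewrite card_ord.
  have b2 : rkr (codeF r2) r2 a < n.+1 by rewrite ltnS; apply: leq_trans (max_card _) _; rewrite card_ord.
  by move: (congr1 val e); rewrite /= !inordK // -eF.
have hbit : forall p, bit F r1 p = bit F r2 p.
  by move=> p; move/ffunP: eH => /(_ p); rewrite !ffunE -eF.
apply/ffunP => -[a b].
rewrite (prefix_cross hp1 hc1) (prefix_cross hp2 hc2) hrk.
congr (_ < _).
have hiw := Fw hc1 b; set i := nat_of_ord (F b).
suff key : forall N y, rkr F r1 y < N -> bc F r1 i y = bc F r2 i y by apply: (key _ a (ltnSn _)).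
elim=> [|N IH] y hy //.
case: (eqVneq (nat_of_ord (F y)) i) => hyi.
  by rewrite -hyi !bc_same hrk.
have IH1 : forall p, nat_of_ord (F p) = F y -> r1 (y,p) -> bc F r1 i p = bc F r2 i p.
  move=> p e hyp; apply: IH; rewrite (intra hp1 hc1 (esym e)) in hyp; lia.
have IH2 : forall p, nat_of_ord (F p) = F y -> r2 (y,p) -> bc F r2 i p = bc F r1 i p.
  move=> p e hyp; symmetry; apply: IH.
  rewrite (intra hp2 hc2 (esym e)) -!hrk in hyp; lia.
apply/eqP; rewrite eqn_leq; apply/andP; split.
  exact: (step_le hp1 hp2 hc1 hc2 hrk hbit hiw hyi IH1).
apply: (step_le hp2 hp1 hc2 hc1 _ _ hiw hyi IH2) => //.
Qed.

End Count.

Lemma log2_expn a e : 0 < a -> log2 (INR (a ^ e)) = (INR e * log2 (INR a))%R.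
Proof.
move=> ha; elim: e => [|e IH].
  by rewrite expn0 /log2 /= ln_1 /Rdiv !Rmult_0_l.
rewrite expnS log2_mul ?expn_gt0 ?ha // IH S_INR; ring.
Qed.

Lemma count_bound n w : 0 < n -> 0 < w -> N_w w n <= n ^ n * 2 ^ (4 * w * n).
Proof.
move=> hn hw.
have h1 : N_w w n <= (w.+1) ^ n * (n.+1) ^ n * 2 ^ (w * n * 2).
  rewrite /N_w -(card_in_imset (@code_inj n w)).
  apply: leq_trans (max_card _) _.
  by rewrite !card_prod !card_ffun !card_prod !card_ord card_bool.
apply: leq_trans h1 _.
have a1 : (w.+1) ^ n <= 2 ^ (w * n).
  by rewrite expnM leq_exp2r // ltn_expl.
have a2 : (n.+1) ^ n <= 2 ^ (w * n) * n ^ n.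
  apply: (@leq_trans ((2 * n) ^ n)); first by rewrite leq_exp2r //; lia.
  rewrite expnMn leq_mul2r; apply/orP; right; apply: leq_pexp2l => //.
  by rewrite leq_pmull.
have -> : 2 ^ (4 * w * n) = 2 ^ (w * n) * 2 ^ (w * n) * 2 ^ (w * n * 2).
  by rewrite -!expnD; congr (_ ^ _); lia.
have := leq_mul (leq_mul a1 a2) (leqnn (2 ^ (w * n * 2))).
move=> h; apply: leq_trans h _.
set X := 2 ^ (w * n); set Y := n ^ n; set Z := 2 ^ (w * n * 2).
apply: eq_leq; rewrite !mulnA; congr (_ * _); rewrite mulnC !mulnA.
by rewrite [Y * X]mulnC.
Qed.

Unset Implicit Arguments.

Theorem theorem4 (n w : nat) (hn : 1 <= n) (hw : 1 <= w) :
  exists T : dtree n,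
    forall r : relT n, r \in posets_w n w ->
      (forall x y : 'I_n, (run r T).1 x y = r (x, y)) /\
      (INR (run r T).2 <= 2 * log2 (INR (N_w w n)) + 4 * INR w * INR n)%R /\
      (INR (run r T).2 <= 2 * INR n * log2 (INR n) + 8 * INR w * INR n
                          + 2 * INR w * log2 (INR w))%R.
Proof.
case: (algo n w) => T hT; exists T => r hr.
case: (hT r hr) => hc hcost; split => //.
have hL : (0 <= log2 (INR (N_w w n)))%R by apply: log2_ge0.
change #|posets_w n w| with (N_w w n) in hcost.
have hb : (log2 (INR (N_w w n)) <= INR n * log2 (INR n) + 4 * INR w * INR n)%R.
  case hN: (N_w w n) => [|N].
    have := log2_ge0 n; have := pos_INR n; have := pos_INR w => h1 h2 h3.
    rewrite -hN.
    have -> : log2 (INR (N_w w n)) = 0%R.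
      by rewrite hN /log2 /= /ln; case: Rlt_dec => [h|_]; [exfalso; lra|rewrite /Rdiv Rmult_0_l].
    have : (0 <= INR n * log2 (INR n))%R by apply: Rmult_le_pos.
    have : (0 <= INR w * INR n)%R by apply: Rmult_le_pos.
    lra.
  rewrite -hN; apply: Rle_trans (log2_le _ (count_bound hn hw)) _; first by rewrite hN.
  have p1 : 0 < n ^ n by rewrite expn_gt0 hn.
  have p2 : 0 < 2 ^ (4 * w * n) by rewrite expn_gt0.
  rewrite (log2_mul p1 p2) (log2_expn n hn) log2_exp2 !mult_INR.
  have e4 : INR 4 = 4%R by rewrite /=; lra.
  rewrite e4; lra.
have h1 : (0 <= INR n * log2 (INR n))%R by apply: Rmult_le_pos; [apply: pos_INR|apply: log2_ge0].
have h2 : (0 <= INR w * log2 (INR w))%R by apply: Rmult_le_pos; [apply: pos_INR|apply: log2_ge0].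
have h3 : (0 <= INR w * INR n)%R by apply: Rmult_le_pos; apply: pos_INR.
split; lra.
Qed.
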